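(* Let $K$ be a totally ordered quasi-field of characteristic $1$, $a\in K$, $n\ge 1$. Let $E=K+KX+\dots+KX^{n-1}\subset K[X]$ and let $\varphi:K[X]\to E$ be the $K$-linear map (additive and compatible with multiplication by scalars) defined on monomials by $\varphi(X^m)=a^qX^r$ where $m=nq+r$ with $0\le r<n$. Then a polynomial $P\in K[X]$ is $*$-singular for $\varphi$ if and only if $P$ belongs to the ideal $J$ of $K[X]$ generated by the polynomials $X^{nk}+a^k$, $k\ge1$.
   Context: A quasi-field of characteristic $1$ is a commutative semiring $K$ with $1+1=1$ in which every nonzero element is multiplicatively invertible; it is ordered by $u\le v$ iff $u+v=v$, totally ordered meaning the order is total. A polynomial $P\in K[X]$ is $*$-singular for $\varphi$ if one can write $P=P_1+P_2$ with $P_1,P_2$ having disjoint sets of monomials and $\varphi(P_1)=\varphi(P_2)$. *)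

(* Defs.v *)
From HB Require Import structures.
From mathcomp Require Import all_boot all_order all_algebra.
Set Implicit Arguments. Unset Strict Implicit. Unset Printing Implicit Defensive.
Import GRing.Theory.
Local Open Scope ring_scope.

Definition quasi_field_char1 (K : comNzSemiRingType) : Prop :=
  (1 + 1 = 1 :> K) /\ (forall x : K, x != 0 -> exists y : K, x * y = 1).

(* The order u <= v iff u + v = v is total. *)
Definition totally_ordered_char1 (K : comNzSemiRingType) : Prop :=
  forall u v : K, u + v = v \/ v + u = u.

Definition phi (K : comNzSemiRingType) (n : nat) (a : K) (P : {poly K}) : {poly K} :=
  \sum_(m < size P) (P`_m * a ^+ (m %/ n))%:P * 'X^(m %% n).

Definition star_singular (K : comNzSemiRingType) (f : {poly K} -> {poly K})
    (P : {poly K}) : Prop :=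
  exists P1 P2 : {poly K},
    [/\ P = P1 + P2, (forall m : nat, P1`_m = 0 \/ P2`_m = 0) & f P1 = f P2].

(* Membership in the ideal of K[X] generated by X^(nk) + a^k, k >= 1:
   finite sums of multiples of generators (the pair (Q, k) encodes Q * gen_(k+1)). *)
Definition in_ideal_J (K : comNzSemiRingType) (n : nat) (a : K) (P : {poly K}) : Prop :=
  exists s : seq ({poly K} * nat),
    P = \sum_(x <- s) x.1 * ('X^(n * x.2.+1) + (a ^+ x.2.+1)%:P).

(* Main.v *)
Require Import Defs.
From HB Require Import structures.
From mathcomp Require Import all_boot all_order all_algebra.
From Stdlib Require Import ClassicalEpsilon.
Set Implicit Arguments. Unset Strict Implicit. Unset Printing Implicit Defensive.
Import GRing.Theory.
Local Open Scope ring_scope.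

Definition lek (K : comNzSemiRingType) (u v : K) := u + v = v.

Lemma idem (K : comNzSemiRingType) (hK : quasi_field_char1 K) (x : K) : x + x = x.
Proof. by case: hK => h _; rewrite -{1 2}[x]mulr1 -mulrDr h mulr1. Qed.

Lemma lek_refl (K : comNzSemiRingType) (hK : quasi_field_char1 K) (x : K) : lek x x.
Proof. exact: (idem hK). Qed.

Lemma le0k (K : comNzSemiRingType) (x : K) : lek 0 x.
Proof. by rewrite /lek add0r. Qed.

Lemma lek_trans (K : comNzSemiRingType) (x y z : K) : lek x y -> lek y z -> lek x z.
Proof. by rewrite /lek => h1 h2; rewrite -h2 addrA h1. Qed.

Lemma lek_anti (K : comNzSemiRingType) (x y : K) : lek x y -> lek y x -> x = y.
Proof. by rewrite /lek => h1 h2; rewrite -h2 addrC h1. Qed.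

Lemma lek_addl (K : comNzSemiRingType) (hK : quasi_field_char1 K) (x y : K) : lek x (x + y).
Proof. by rewrite /lek addrA (idem hK). Qed.

Lemma lek_addr (K : comNzSemiRingType) (hK : quasi_field_char1 K) (x y : K) : lek y (x + y).
Proof. by rewrite addrC; apply: lek_addl. Qed.

Lemma lek_add (K : comNzSemiRingType) (x y z : K) : lek x z -> lek y z -> lek (x + y) z.
Proof. by rewrite /lek => h1 h2; rewrite -addrA h2 h1. Qed.

Lemma lek_mul (K : comNzSemiRingType) (x y c : K) : lek x y -> lek (x * c) (y * c).
Proof. by rewrite /lek => h; rewrite -mulrDl h. Qed.

Lemma lek_mul2 (K : comNzSemiRingType) (hK : quasi_field_char1 K) (x y c d : K) :
  lek x y -> lek c d -> lek (x * c) (y * d).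
Proof.
move=> h1 h2; apply: (@lek_trans _ _ (y * c)); first exact: lek_mul.
by rewrite ![y * _]mulrC; apply: lek_mul.
Qed.

Lemma lek0 (K : comNzSemiRingType) (x : K) : lek x 0 -> x = 0.
Proof. by rewrite /lek addr0. Qed.

Lemma lek_total (K : comNzSemiRingType) (htot : totally_ordered_char1 K) (x y : K) : lek x y \/ lek y x.
Proof. exact: htot. Qed.

Lemma add_cases (K : comNzSemiRingType) (hK : quasi_field_char1 K) (htot : totally_ordered_char1 K) (x y : K) :
  x + y = x \/ x + y = y.
Proof.
case: (htot x y) => h; [by right | left]. by rewrite addrC.
Qed.

Lemma sum_term (K : comNzSemiRingType) (hK : quasi_field_char1 K) (I : eqType) (r : seq I) (f : I -> K) i :
  i \in r -> lek (f i) (\sum_(j <- r) f j).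
Proof.
elim: r => // j r IH; rewrite inE big_cons => /orP [/eqP -> | /IH h].
  exact: lek_addl.
apply: lek_trans h _; exact: lek_addr.
Qed.

Lemma sum_le (K : comNzSemiRingType) (I : Type) (r : seq I) (f : I -> K) x :
  (forall i, lek (f i) x) -> lek (\sum_(j <- r) f j) x.
Proof.
move=> h; elim: r => [|j r IH]; first by rewrite big_nil; apply: le0k.
by rewrite big_cons; apply: lek_add.
Qed.

Lemma sum_cases (K : comNzSemiRingType) (hK : quasi_field_char1 K) (htot : totally_ordered_char1 K)
  (I : eqType) (r : seq I) (f : I -> K) :
  \sum_(j <- r) f j = 0 \/ exists2 i, i \in r & \sum_(j <- r) f j = f i.
Proof.
elim: r => [|j r [IH|[i ir IH]]]; first by left; rewrite big_nil.
- by right; exists j; rewrite ?inE ?eqxx // big_cons IH addr0.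
- rewrite big_cons IH; case: (add_cases hK htot (f j) (f i)) => ->; right.
    by exists j; rewrite ?inE ?eqxx.
  by exists i; rewrite // inE ir orbT.
Qed.

Lemma sum_eq (K : comNzSemiRingType) (hK : quasi_field_char1 K) (I : eqType) (r : seq I) (f : I -> K) x :
  (forall i, lek (f i) x) -> (x = 0 \/ exists2 i, i \in r & f i = x) ->
  \sum_(j <- r) f j = x.
Proof.
move=> h1 [hx|[i ir hi]]; first by subst x; apply: lek0; apply: sum_le.
apply: lek_anti; first exact: sum_le.
by rewrite -hi; apply: sum_term.
Qed.

Lemma mul_neq0 (K : comNzSemiRingType) (hK : quasi_field_char1 K) (x y : K) : x != 0 -> y != 0 -> x * y != 0.
Proof.
case: hK => _ hinv hx hy; apply/eqP => h.
case: (hinv x hx) => z hz; move/eqP: hy; apply.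
by rewrite -[y]mul1r -hz mulrC mulrA [y * x]mulrC h mul0r.
Qed.

Lemma exp_neq0 (K : comNzSemiRingType) (hK : quasi_field_char1 K) (x : K) k : x != 0 -> x ^+ k != 0.
Proof.
move=> hx; elim: k => [|k IH]; first by rewrite expr0 oner_neq0.
by rewrite exprS; apply: mul_neq0.
Qed.

Lemma lek_cancel (K : comNzSemiRingType) (a b : K) (x y : K) k : a * b = 1 ->
  lek (x * a ^+ k) (y * a ^+ k) -> lek x y.
Proof.
move=> hab h; have := lek_mul (b ^+ k) h.
by rewrite -!mulrA -exprMn hab expr1n !mulr1.
Qed.
Lemma phi_coef (K : comNzSemiRingType) n (a : K) (Q : {poly K}) N j :
  (size Q <= N)%N ->
  (phi n a Q)`_j = \sum_(m < N) (if (m %% n == j)%N then Q`_m * a ^+ (m %/ n) else 0).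
Proof.
move=> hN; rewrite /phi coef_sum.
rewrite (big_ord_widen N (fun m => ((Q`_m * a ^+ (m %/ n))%:P * 'X^(m %% n))`_j)) //.
rewrite big_mkcond /=; apply: eq_bigr => m _.
rewrite coefCM coefXn eq_sym; case: ifP => hm.
  by case: eqP => _; rewrite ?mulr1 ?mulr0.
rewrite nth_default ?mul0r; last by rewrite leqNgt hm.
by case: eqP => _; rewrite ?mulr1 ?mulr0.
Qed.
Definition vv (K : comNzSemiRingType) n (a : K) (P : {poly K}) m := P`_m * a ^+ (m %/ n).

Definition condC (K : comNzSemiRingType) n (a : K) (P : {poly K}) :=
  forall m, exists m', [/\ m' != m, (m' %% n = m %% n)%N & lek (vv n a P m) (vv n a P m')].

Lemma condC_zero (K : comNzSemiRingType) n (a : K) (P : {poly K}) m : (0 < n)%N ->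
  vv n a P m = 0 -> exists m', [/\ m' != m, (m' %% n = m %% n)%N & lek (vv n a P m) (vv n a P m')].
Proof.
move=> hn h0; exists (m + n)%N; split; last by rewrite h0; apply: le0k.
  by rewrite -{2}[m]addn0 eqn_add2l -lt0n.
by rewrite modnDr.
Qed.

Lemma sing_half (K : comNzSemiRingType) (hK : quasi_field_char1 K)
  (htot : totally_ordered_char1 K) n (hn : (0 < n)%N) (a : K) (P P1 P2 : {poly K}) m :
  P = P1 + P2 -> P2`_m = 0 -> phi n a P1 = phi n a P2 ->
  exists m', [/\ m' != m, (m' %% n = m %% n)%N & lek (vv n a P m) (vv n a P m')].
Proof.
move=> hP h2 hphi.
have [h0|hne] := eqVneq (vv n a P m) 0; first exact: condC_zero.
set N := (size P1 + size P2 + m.+1)%N.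
have hmN : (m < N)%N by rewrite /N ltn_addl.
have hs1 : (size P1 <= N)%N by rewrite /N -addnA leq_addr.
have hs2 : (size P2 <= N)%N by rewrite /N -addnA addnC -addnA leq_addr.
have hv : vv n a P m = vv n a P1 m by rewrite /vv hP coefD h2 addr0.
have h1 : lek (vv n a P m) (phi n a P1)`_(m %% n).
  rewrite (phi_coef _ _ _ hs1).
  have := @sum_term K hK _ (index_enum 'I_N)
    (fun i : 'I_N => if ((i : nat) %% n == m %% n)%N then P1`_i * a ^+ (i %/ n) else 0)
    (Ordinal hmN) (mem_index_enum _).
  by rewrite /= eqxx hv.
rewrite hphi (phi_coef _ _ _ hs2) in h1.
case: (@sum_cases K hK htot _ (index_enum 'I_N)
    (fun i : 'I_N => if ((i : nat) %% n == m %% n)%N then P2`_i * a ^+ (i %/ n) else 0)) => [hz|[i _ hi]].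
  by move: h1; rewrite hz => /lek0 h0; move: hne; rewrite h0 eqxx.
rewrite hi in h1; move: h1; case: ifP => hmod h1.
  exists (nat_of_ord i); split.
  - apply/eqP => him; move: hne; rewrite (lek0 (x := vv n a P m)) ?eqxx //.
    by move: h1; rewrite him h2 mul0r.
  - exact/eqP.
  - apply: lek_trans h1 _; rewrite /vv; apply: lek_mul.
    by rewrite hP coefD; apply: lek_addr.
by move: hne; rewrite (lek0 h1) eqxx.
Qed.

Lemma sing_C (K : comNzSemiRingType) (hK : quasi_field_char1 K)
  (htot : totally_ordered_char1 K) n (hn : (0 < n)%N) (a : K) (P : {poly K}) :
  star_singular (phi n a) P -> condC n a P.
Proof.
case=> P1 [P2 [hP hdis hphi]] m.
case: (hdis m) => h.
  apply: (sing_half hK htot hn (P1 := P2) (P2 := P1)) => //.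
  by rewrite hP addrC.
exact: (sing_half hK htot hn (P1 := P1) (P2 := P2)).
Qed.
Lemma gen_coef (K : comNzSemiRingType) (Q : {poly K}) d (c : K) i :
  (Q * ('X^d + c%:P))`_i = (if (i < d)%N then 0 else Q`_(i - d)) + Q`_i * c.
Proof. by rewrite mulrDr coefD coefMXn coefMC. Qed.

Lemma J_C (K : comNzSemiRingType) (hK : quasi_field_char1 K)
  (htot : totally_ordered_char1 K) n (hn : (0 < n)%N) (a : K) (P : {poly K}) :
  in_ideal_J n a P -> condC n a P.
Proof.
case=> s hP m.
have [h0|hne] := eqVneq (vv n a P m) 0; first exact: condC_zero.
pose f i (x : {poly K} * nat) :=
  (if (i < n * x.2.+1)%N then 0 else x.1`_(i - n * x.2.+1)) + x.1`_i * a ^+ x.2.+1.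
have hc i : P`_i = \sum_(x <- s) f i x.
  by rewrite hP coef_sum; apply: eq_bigr => x _; rewrite gen_coef.
have hle i x : x \in s -> lek (f i x) P`_i.
  by move=> xs; rewrite hc; apply: sum_term.
case: (sum_cases hK htot s (f m)) => [hz|[x xs hx]].
  by move: hne; rewrite /vv hc hz mul0r eqxx.
set k := x.2.+1 in hx hle.
have hnk : (0 < n * k)%N by rewrite muln_gt0 hn.
case: (add_cases hK htot (if (m < n * k)%N then 0 else x.1`_(m - n * k)) (x.1`_m * a ^+ k)) => hx2;
  rewrite /f -/k hx2 in hx.
- case: ifP hx => hm hx.
    by move: hne; rewrite /vv hc hx mul0r eqxx.
  have hm' : (n * k <= m)%N by rewrite leqNgt hm.
  exists (m - n * k)%N; split.
  + by rewrite neq_ltn ltn_subrL hnk /= (leq_trans hnk hm').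
  + by rewrite -{2}(subnK hm') addnC [(n * k)%N]mulnC modnMDl.
  + have e : (m %/ n = (m - n * k) %/ n + k)%N.
      by rewrite -{1}(subnK hm') addnC [(n * k)%N]mulnC divnMDl // addnC.
    rewrite /vv hc hx e exprD mulrA mulrAC.
    apply: lek_mul; apply: lek_trans (hle _ x xs).
    by rewrite /f -/k; apply: (lek_addr hK).
- exists (m + n * k)%N; split.
  + by rewrite -{2}[m]addn0 eqn_add2l -lt0n.
  + by rewrite addnC [(n * k)%N]mulnC modnMDl.
  + have e : ((m + n * k) %/ n = m %/ n + k)%N.
      by rewrite addnC [(n * k)%N]mulnC divnMDl // addnC.
    rewrite /vv {1}hc hx e exprD [a ^+ (m %/ n) * _]mulrC !mulrA.
    apply: lek_mul; apply: lek_mul; apply: lek_trans (hle _ x xs).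
    rewrite /f -/k ltnNge leq_addl /= addnK; apply: (lek_addl hK).

Qed.
Lemma max_ex (K : comNzSemiRingType) (hK : quasi_field_char1 K) (htot : totally_ordered_char1 K) n (a : K) (P : {poly K}) r :
  exists s, (s %% n = r %% n)%N /\
    forall x, (x %% n = r %% n)%N -> lek (vv n a P x) (vv n a P s).
Proof.
suff [s [hs1 hs2]] : exists s, (s %% n = r %% n)%N /\
    forall x, (x < size P)%N -> (x %% n = r %% n)%N -> lek (vv n a P x) (vv n a P s).
  exists s; split => // x hx; case: (ltnP x (size P)) => hxP; first exact: hs2.
  by rewrite /vv nth_default // mul0r; apply: le0k.
elim: (size P) => [|N [s [hs1 hs2]]]; first by exists r.
case: (eqVneq (N %% n) (r %% n))%N => hN; last first.
  exists s; split => // x; rewrite ltnS leq_eqVlt => /orP [/eqP -> hx|]; last exact: hs2.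
  by rewrite hx eqxx in hN.
case: (htot (vv n a P N) (vv n a P s)) => hle.
  exists s; split => // x; rewrite ltnS leq_eqVlt => /orP [/eqP -> _|]; last exact: hs2.
  exact: hle.
exists N; split => // x; rewrite ltnS leq_eqVlt => /orP [/eqP -> _|hx hxm].
  exact: lek_refl.
exact: lek_trans (hs2 x hx hxm) hle.
Qed.
Definition pick_spec (K : comNzSemiRingType) n (a : K) (P : {poly K}) r s :=
  [/\ (s %% n = r %% n)%N,
      (forall x, (x %% n = r %% n)%N -> lek (vv n a P x) (vv n a P s)) &
      exists m1, [/\ m1 != s, (m1 %% n = r %% n)%N & vv n a P m1 = vv n a P s]].

Lemma pick_ex (K : comNzSemiRingType) (hK : quasi_field_char1 K)
  (htot : totally_ordered_char1 K) n (a : K) (P : {poly K}) :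
  condC n a P -> exists pick : nat -> nat, forall r, pick_spec n a P r (pick r).
Proof.
move=> hC.
have H r : exists s, pick_spec n a P r s.
  have [s [hs1 hs2]] := max_ex hK htot n a P r.
  have [m1 [hm1 hm2 hm3]] := hC s.
  exists s; split => //; exists m1; split => //; first by rewrite hm2.
  apply: lek_anti => //; apply: hs2; by rewrite hm2.
exists (fun r => proj1_sig (constructive_indefinite_description _ (H r))).
by move=> r; exact: proj2_sig (constructive_indefinite_description _ (H r)).
Qed.

Lemma C_S (K : comNzSemiRingType) (hK : quasi_field_char1 K)
  (htot : totally_ordered_char1 K) n (hn : (0 < n)%N) (a : K) (P : {poly K}) :
  condC n a P -> star_singular (phi n a) P.
Proof.
move=> hC; have [pick hp] := pick_ex hK htot hC.
rewrite /pick_spec in hp.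
pose sel m := pick (m %% n)%N.
have hsel m : (sel m %% n = m %% n)%N by case: (hp (m %% n)%N) => h _ _; rewrite /sel h modn_mod.
have hsel2 m : sel (sel m) = sel m by rewrite /sel hsel.
exists (\poly_(i < size P) (if sel i == i then 0 else P`_i)),
       (\poly_(i < size P) (if sel i == i then P`_i else 0)); split.
- apply/polyP => i; rewrite coefD !coef_poly.
  case: ltnP => hi; last by rewrite nth_default // addr0.
  by case: eqP; rewrite ?add0r ?addr0.
- move=> m; rewrite !coef_poly; case: ltnP => _; last by left.
  by case: eqP; [left|right].
- apply/polyP => j.
  rewrite (phi_coef _ _ _ (size_poly _ _)) (phi_coef _ _ _ (size_poly _ _)).
  case: (ltnP j n) => hj; last first.
    by rewrite !big1 // => m _; case: eqP => // hm; move: hj; rewrite -hm leqNgt ltn_mod hn.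
  have [hs1 hs2 [m1 [hm1 hm2 hm3]]] := hp j.
  have hjs : (j %% n = j)%N := modn_small hj.
  have hsels : sel (pick j) = (pick j) by rewrite /sel hs1 hjs.
  have hselm1 : sel m1 = (pick j) by rewrite /sel hm2 hjs.
  have hbound (b : bool) (m : 'I_(size P)) : lek
     (if (m %% n == j)%N then (\poly_(i < size P) (if sel i == i then
        (if b then P`_i else 0) else (if b then 0 else P`_i)))`_m * a ^+ (m %/ n) else 0)
     (vv n a P (pick j)).
    case: eqP => hm; last exact: le0k.
    rewrite coef_poly ltn_ord.
    have hv : lek (vv n a P m) (vv n a P (pick j)) by apply: hs2; rewrite hm.
    by case: ifP => _; case: b; rewrite ?mul0r; first [exact: hv | exact: le0k].
  transitivity (vv n a P (pick j)).
    apply: sum_eq => //; first by move=> i; exact: (hbound false i).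
    have [h0|hne] := eqVneq (vv n a P (pick j)) 0; [by left | right].
    have hm1P : (m1 < size P)%N.
      rewrite ltnNge; apply/negP => h; move: hne; rewrite -hm3 /vv nth_default //.
      by rewrite mul0r eqxx.
    exists (Ordinal hm1P); first exact: mem_index_enum.
    rewrite /= hm2 hjs eqxx coef_poly hm1P hselm1.
    by rewrite eq_sym (negbTE hm1); exact: hm3.
  symmetry; apply: sum_eq => //; first by move=> i; exact: (hbound true i).
  have [h0|hne] := eqVneq (vv n a P (pick j)) 0; [by left | right].
  have hsP : ((pick j) < size P)%N.
    rewrite ltnNge; apply/negP => h; move: hne; rewrite /vv nth_default //.
    by rewrite mul0r eqxx.
  exists (Ordinal hsP); first exact: mem_index_enum.
  by rewrite /= hs1 hjs eqxx coef_poly hsP hsels eqxx.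
Qed.
Lemma J0 (K : comNzSemiRingType) n (a : K) : in_ideal_J n a 0.
Proof. by exists [::]; rewrite big_nil. Qed.

Lemma JD (K : comNzSemiRingType) n (a : K) P Q :
  in_ideal_J n a P -> in_ideal_J n a Q -> in_ideal_J n a (P + Q).
Proof. by case=> s1 -> [s2 ->]; exists (s1 ++ s2); rewrite big_cat. Qed.

Lemma Jgen (K : comNzSemiRingType) n (a : K) (Q : {poly K}) k : (0 < k)%N ->
  in_ideal_J n a (Q * ('X^(n * k) + (a ^+ k)%:P)).
Proof. by move=> hk; exists [:: (Q, k.-1)]; rewrite big_seq1 /= prednK. Qed.

Lemma Jsum (K : comNzSemiRingType) n (a : K) N (T : 'I_N -> {poly K}) :
  (forall i, in_ideal_J n a (T i)) -> in_ideal_J n a (\sum_(i < N) T i).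
Proof.
move=> h; elim/big_rec: _ => [|i x _ hx]; first exact: J0.
exact: JD.
Qed.

Definition dd (K : comNzSemiRingType) n (a b : K) (P : {poly K}) m s :=
  if (m %/ n < s %/ n)%N then P`_m * b ^+ (s %/ n - m %/ n) else P`_m * a ^+ (m %/ n - s %/ n).

Definition Tp (K : comNzSemiRingType) n (a b : K) (P : {poly K}) m s :=
  if (m %/ n < s %/ n)%N then
    (P`_m * b ^+ (s %/ n - m %/ n))%:P * 'X^m *
      ('X^(n * (s %/ n - m %/ n)) + (a ^+ (s %/ n - m %/ n))%:P)
  else (P`_m)%:P * 'X^s * ('X^(n * (m %/ n - s %/ n)) + (a ^+ (m %/ n - s %/ n))%:P).

Lemma shift_eq n m s : (m %% n = s %% n)%N -> (m %/ n <= s %/ n)%N ->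
  (m + n * (s %/ n - m %/ n) = s)%N.
Proof.
move=> hmod hq.
have hm := divn_eq m n; have hs := divn_eq s n.
move: hq hm hs; rewrite hmod.
move: (m %/ n)%N (s %/ n)%N (s %% n)%N => qm qs r hq -> ->.
by rewrite -{2}(subnKC hq) mulnDl [(n * _)%N]mulnC addnAC.
Qed.
Lemma Tform (K : comNzSemiRingType) n (a b : K) (hab : a * b = 1) (P : {poly K}) m s :
  (m %% n = s %% n)%N -> m != s ->
  [/\ Tp n a b P m s = (P`_m)%:P * 'X^m + (dd n a b P m s)%:P * 'X^s,
      in_ideal_J n a (Tp n a b P m s) &
      dd n a b P m s * a ^+ (s %/ n) = vv n a P m].
Proof.
move=> hmod hne; rewrite /Tp /dd /vv; case: ifP => hq.
  have e := shift_eq hmod (ltnW hq).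
  have e2 : (s %/ n = m %/ n + (s %/ n - m %/ n))%N by rewrite subnKC // ltnW.
  set k := (s %/ n - m %/ n)%N in e e2 *.
  split.
  - rewrite mulrDr -mulrA -exprD e mulrAC -polyCM addrC; congr (_ + _).
    by rewrite -mulrA -exprMn [b * a]mulrC hab expr1n mulr1.
  - by apply: Jgen; rewrite subn_gt0.
  - rewrite e2 exprD mulrACA -exprMn [b * a]mulrC hab expr1n mulr1.
    by [].
have hqs : (s %/ n < m %/ n)%N.
  rewrite ltn_neqAle leqNgt hq andbT; apply/eqP => heq; move/eqP: hne; apply.
  by rewrite (divn_eq m n) (divn_eq s n) heq hmod.
have e := shift_eq (esym hmod) (ltnW hqs).
set k := (m %/ n - s %/ n)%N in e *.
split.
- by rewrite mulrDr -mulrA -exprD e mulrAC -polyCM.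
- by apply: Jgen; rewrite subn_gt0.
- by rewrite -mulrA -exprD subnK // ltnW.
Qed.
Lemma mul_cancel (K : comNzSemiRingType) (a b x y : K) k : a * b = 1 ->
  x * a ^+ k = y * a ^+ k -> x = y.
Proof.
move=> hab h; have := congr1 (fun z => z * b ^+ k) h.
by rewrite -!mulrA -exprMn hab expr1n !mulr1.
Qed.

Lemma C_J (K : comNzSemiRingType) (hK : quasi_field_char1 K)
  (htot : totally_ordered_char1 K) n (hn : (0 < n)%N) (a : K) (P : {poly K}) :
  condC n a P -> in_ideal_J n a P.
Proof.
move=> hC.
have [ha0 | ha] := eqVneq a 0.
  have hlow m : (m < n)%N -> P`_m = 0.
    move=> hm; have [m' [hne hmod hle]] := hC m.
    have hq : (0 < m' %/ n)%N.
      rewrite lt0n; apply/eqP => h0; move/eqP: hne; apply.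
      by rewrite (divn_eq m' n) h0 mul0n add0n hmod modn_small.
    move: hle; rewrite /vv ha0 !expr0n (divn_small hm) /= mulr1.
    by rewrite eqn0Ngt hq /= mulr0 => /lek0.
  rewrite -[P]coefK poly_def; apply: Jsum => i.
  case: (ltnP i n) => hi; first by rewrite hlow // scale0r; apply: J0.
  have -> : P`_i *: 'X^i = (P`_i *: 'X^(i - n)) * ('X^(n * 1) + (a ^+ 1)%:P).
    by rewrite ha0 expr1 addr0 muln1 -scalerAl -exprD subnK.
  exact: Jgen.
case: (hK) => _ hinv; have [b hab] := hinv a ha.
have [pick hp] := pick_ex hK htot hC.
rewrite /pick_spec in hp.
pose sel m := pick (m %% n)%N.
have hsel m : (sel m %% n = m %% n)%N by case: (hp (m %% n)%N) => h _ _; rewrite /sel h modn_mod.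
have hsel2 m : sel (sel m) = sel m by rewrite /sel hsel.
have hmax m : lek (vv n a P m) (vv n a P (sel m)).
  by case: (hp (m %% n)%N) => _ h _; apply: h; rewrite modn_mod.
have hclaim : P = \sum_(m < size P) (if sel m == m then 0 else Tp n a b P m (sel m)).
  apply/polyP => j; rewrite coef_sum; symmetry; apply: (sum_eq hK).
    move=> m; case: eqP => hsm; first by rewrite coef0; apply: le0k.
    have [-> _ hdd] := Tform (n := n) hab P (esym (hsel m)) (introN eqP (nesym hsm)).
    rewrite coefD !coefCM !coefXn.
    case: (eqVneq j m) => hjm.
      rewrite hjm eq_sym (introF eqP hsm) mulr1 mulr0 addr0; exact: lek_refl.
    rewrite mulr0 add0r; case: eqP => hjs; last by rewrite mulr0; apply: le0k.
    rewrite mulr1 hjs; apply: (lek_cancel (k := (sel m %/ n)%N) hab).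
    by rewrite hdd; apply: hmax.
  have [hz|hPj] := eqVneq P`_j 0; [by left | right].
  have hvj : vv n a P j != 0 by rewrite /vv; apply: mul_neq0 => //; apply: exp_neq0.
  have [hsj|hsj] := eqVneq (sel j) j.
    have [_ _ [m1 [hm1 hm2 hm3]]] := hp (j %% n)%N.
    have hm1s : sel m1 = j by rewrite /sel hm2 modn_mod.
    rewrite -/(sel j) hsj in hm1 hm3.
    have hm1N : (m1 < size P)%N.
      rewrite ltnNge; apply/negP => h; move: hvj; rewrite -hm3 /vv nth_default //.
      by rewrite mul0r eqxx.
    exists (Ordinal hm1N); first exact: mem_index_enum.
    rewrite /= hm1s eq_sym (negbTE hm1).
    have [-> _ hdd] := Tform (n := n) hab P (m := m1) (s := j) (etrans hm2 (modn_mod j n)) hm1.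
    rewrite coefD !coefCM !coefXn eqxx mulr1 eq_sym (negbTE hm1) mulr0 add0r.
    by apply: (mul_cancel (k := (j %/ n)%N) hab); rewrite hdd hm3.
  have hjN : (j < size P)%N.
    by rewrite ltnNge; apply/negP => h; move: hPj; rewrite nth_default // eqxx.
  exists (Ordinal hjN); first exact: mem_index_enum.
  rewrite /= (negbTE hsj).
  have hjs' : j != sel j by rewrite eq_sym.
  have [-> _ _] := Tform (n := n) hab P (m := j) (s := sel j) (esym (hsel j)) hjs'.
  by rewrite coefD !coefCM !coefXn eqxx mulr1 eq_sym (negbTE hsj) mulr0 addr0.
rewrite hclaim; apply: Jsum => m; case: eqP => hsm; first exact: J0.
by have [_ hJ _] := Tform (n := n) hab P (esym (hsel m)) (introN eqP (nesym hsm)).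
Qed.

Theorem lemma3p4 (K : comNzSemiRingType) (hK : quasi_field_char1 K)
    (htot : totally_ordered_char1 K) (a : K) (n : nat) (hn : (1 <= n)%N)
    (P : {poly K}) :
  star_singular (phi n a) P <-> in_ideal_J n a P.
Proof.
split => h.
  exact: (C_J hK htot hn (sing_C hK htot hn h)).
exact: (C_S hK htot hn (J_C hK htot hn h)).
Qed.
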